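(* Let $J$ be a set, let $\mathbb I=[J]^{\leq\omega}$ be the set of countable subsets of $J$ ordered by inclusion, and for $D\in\mathbb I$ let $G_D=\{\sigma\in\operatorname{Sym}(J)\mid\operatorname{supp}(\sigma)\subseteq D\}$ with the subgroup topology. Then $\{G_D\}_{D\in\mathbb I}$ (with inclusions as bonding maps) satisfies ACP, and $\operatorname{colim}_{D\in\mathbb I}G_D=\operatorname{Sym}_\omega(J)$.
   Context: $\operatorname{Sym}(J)$ is the group of permutations of $J$ with the pointwise topology induced from $J^J$, $J$ being discrete; it is a topological group. The support of $\sigma$ is $\operatorname{supp}(\sigma)=\{x\in J\mid\sigma(x)\neq x\}$, and $\operatorname{Sym}_\omega(J)$ is the subgroup of permutations with countable support, with the subspace topology. $\operatorname{colim}$ denotes the union with the colimit space topology $\{U\mid U\cap G_D\text{ open in }G_D\ \forall D\}$. ACP means that this colimit space topology coincides with the finest group topology on the union making all inclusions continuous. *)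

(* Defs.v *)
(* sets are predicates, topologies are families of predicates. *)
From Stdlib Require Import List.
Import ListNotations.

Section Defs.
Variable J : Type.

Definition pset := (J -> J) -> Prop.

Definition is_perm (f : J -> J) : Prop :=
  exists g : J -> J, (forall x, g (f x) = x) /\ (forall x, f (g x) = x).

Definition supp (f : J -> J) : J -> Prop := fun x => f x <> x.

Definition countable_set (D : J -> Prop) : Prop :=
  exists c : J -> nat, forall x y, D x -> D y -> c x = c y -> x = y.

Definition Sym : pset := is_perm.

Definition G_ (D : J -> Prop) : pset :=
  fun f => is_perm f /\ (forall x, supp f x -> D x).

Definition Sym_omega : pset := fun f => is_perm f /\ countable_set (supp f).

(* pointwise topology on J^J, J discrete: basic opens fix finitely many values *)
Definition pointwise_open (V : pset) : Prop :=
  forall f, V f -> exists l : list J,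
    forall g, (forall x, In x l -> g x = f x) -> V g.

Definition subspace_open (Topen : pset -> Prop) (S : pset) (U : pset) : Prop :=
  exists V, Topen V /\ forall f, U f <-> (V f /\ S f).

Definition G_open (D : J -> Prop) : pset -> Prop :=
  subspace_open (subspace_open pointwise_open Sym) (G_ D).

Definition union_G : pset := fun f => exists D, countable_set D /\ G_ D f.

Definition colim_open (U : pset) : Prop :=
  (forall f, U f -> union_G f) /\
  (forall D, countable_set D -> G_open D (fun f => U f /\ G_ D f)).

Definition is_topology (S : pset) (T : pset -> Prop) : Prop :=
  (forall U, T U -> forall f, U f -> S f) /\
  T (fun _ => False) /\ T S /\
  (forall F : pset -> Prop, (forall U, F U -> T U) ->
      T (fun f => exists U, F U /\ U f)) /\
  (forall U V, T U -> T V -> T (fun f => U f /\ V f)).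

Definition is_group_topology (S : pset) (T : pset -> Prop) : Prop :=
  is_topology S T /\
  (* multiplication S x S -> S continuous (product topology) *)
  (forall W, T W -> forall f g, S f -> S g -> W (fun x => f (g x)) ->
     exists A B, T A /\ T B /\ A f /\ B g /\
       forall a b, A a -> B b -> W (fun x => a (b x))) /\
  (* inversion continuous: preimage of an open set under inversion is open *)
  (forall W, T W -> T (fun f => S f /\ exists g, W g /\
        (forall x, g (f x) = x) /\ (forall x, f (g x) = x))).

Definition inclusions_continuous (T : pset -> Prop) : Prop :=
  forall D, countable_set D -> forall V, T V -> G_open D (fun f => V f /\ G_ D f).

Definition ACP : Prop :=
  is_group_topology union_G colim_open /\ inclusions_continuous colim_open /\
  (forall T, is_group_topology union_G T -> inclusions_continuous T ->
     forall U, T U -> colim_open U).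

End Defs.

(* Main.v *)
Require Import Defs.
From Stdlib Require Import List.
From Stdlib Require Import Arith Lia Cantor.
From Stdlib Require Import Classical ClassicalEpsilon FunctionalExtensionality PropExtensionality.
Import ListNotations.

Lemma choice_fun {A B : Type} (R : A -> B -> Prop) :
  (forall a, exists b, R a b) -> exists g, forall a, R a (g a).
Proof.
  intros H. exists (fun a => proj1_sig (constructive_indefinite_description _ (H a))).
  intro a. exact (proj2_sig (constructive_indefinite_description _ (H a))).
Qed.

Definition agree {J : Type} (h f : J -> J) (l : list J) := forall x, In x l -> h x = f x.

Definition locop {J : Type} (S U : pset J) : Prop :=
  (forall f, U f -> S f) /\
  (forall f, U f -> exists l, forall h, S h -> agree h f l -> U h).

Lemma subspace_local {J : Type} (S U : pset J) :
  subspace_open J (pointwise_open J) S U <-> locop S U.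
Proof.
  split.
  - intros [V [HV HU]]. split.
    + intros f Hf. apply HU in Hf. tauto.
    + intros f Hf. destruct (proj1 (HU f) Hf) as [Vf Sf].
      destruct (HV f Vf) as [l Hl]. exists l. intros h Sh Ah.
      apply HU. split; auto.
  - intros [HS Hl].
    exists (fun g => exists f l, U f /\ agree g f l /\ (forall h, S h -> agree h f l -> U h)).
    split.
    + intros g [f [l [Uf [Ag Hh]]]]. exists l. intros g' Ag'.
      exists f, l. repeat split; auto; intros x Hx; rewrite Ag', Ag; auto.
    + intros f. split.
      * intros Uf. split; auto. destruct (Hl f Uf) as [l Hf]. exists f, l.
        repeat split; auto; intros x _; reflexivity.
      * intros [[f0 [l [Uf0 [Ag Hh]]]] Sf]. apply Hh; auto.
Qed.

Definition enum_of {J : Type} (S : J -> Prop) (e : nat -> option J) :=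
  forall y, S y <-> exists n, e n = Some y.

Lemma countable_enum {J : Type} (S : J -> Prop) : countable_set J S -> exists e, enum_of S e.
Proof.
  intros [c Hc].
  assert (H : forall n, exists o : option J, (forall y, o = Some y -> S y /\ c y = n)
                 /\ (forall y, S y -> c y = n -> o = Some y)).
  { intro n. destruct (classic (exists y, S y /\ c y = n)) as [[y [Sy Cy]] | Hn].
    - exists (Some y). split.
      + intros y' E. injection E; intros <-. auto.
      + intros y' Sy' Cy'. f_equal. apply Hc; auto; congruence.
    - exists None. split. intros y E; discriminate. intros y Sy Cy. exfalso. apply Hn. eauto. }
  destruct (choice_fun _ H) as [e He]. exists e. intro y. split.
  - intros Sy. exists (c y). apply (proj2 (He (c y))); auto.
  - intros [n En]. apply (proj1 (He n)) in En. tauto.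
Qed.

Lemma enum_countable {J : Type} (S : J -> Prop) e : enum_of S e -> countable_set J S.
Proof.
  intros He.
  assert (H : forall y, exists n, S y -> e n = Some y).
  { intro y. destruct (classic (S y)) as [Sy|Sy].
    - destruct (proj1 (He y) Sy) as [n En]. eauto.
    - exists 0. intro; contradiction. }
  destruct (choice_fun _ H) as [c Hc]. exists c. intros x y Sx Sy E.
  pose proof (Hc x Sx). pose proof (Hc y Sy). rewrite E in *. congruence.
Qed.

Lemma countable_sub {J : Type} (A B : J -> Prop) :
  countable_set J A -> (forall x, B x -> A x) -> countable_set J B.
Proof. intros [c Hc] H. exists c. intros; apply Hc; auto. Qed.

Lemma countable_union {J : Type} (A B : J -> Prop) :
  countable_set J A -> countable_set J B -> countable_set J (fun x => A x \/ B x).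
Proof.
  intros HA HB. destruct (countable_enum _ HA) as [ea Ha].
  destruct (countable_enum _ HB) as [eb Hb].
  apply (enum_countable _ (fun n => match Cantor.of_nat n with
                                    | (0, j) => ea j | (_, j) => eb j end)).
  intro y. split.
  - intros [Ay|By].
    + destruct (proj1 (Ha y) Ay) as [j Ej]. exists (Cantor.to_nat (0, j)).
      rewrite Cantor.cancel_of_to. exact Ej.
    + destruct (proj1 (Hb y) By) as [j Ej]. exists (Cantor.to_nat (1, j)).
      rewrite Cantor.cancel_of_to. exact Ej.
  - intros [n En]. destruct (Cantor.of_nat n) as [[|i] j].
    + left. apply Ha. eauto.
    + right. apply Hb. eauto.
Qed.

Lemma inv_omega {J : Type} (h h' : J -> J) :
  Sym_omega J h -> (forall x, h' (h x) = x) -> (forall x, h (h' x) = x) -> Sym_omega J h'.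
Proof.
  intros [_ Hc] H1 H2. split.
  - exists h. split; auto.
  - apply (countable_sub _ _ Hc). intros x Hx E. apply Hx.
    rewrite <- E at 1. apply H1.
Qed.

Lemma comp_omega {J : Type} (a b : J -> J) :
  Sym_omega J a -> Sym_omega J b -> Sym_omega J (fun x => a (b x)).
Proof.
  intros [[a' [Ha1 Ha2]] Hca] [[b' [Hb1 Hb2]] Hcb]. split.
  - exists (fun x => b' (a' x)). split; intros x.
    + rewrite Ha1, Hb1; auto.
    + rewrite Hb2, Ha2; auto.
  - apply (countable_sub _ _ (countable_union _ _ Hca Hcb)).
    intros x Hx. destruct (classic (b x = x)) as [E|E].
    + left. intro E'. apply Hx. rewrite E. exact E'.
    + right. exact E.
Qed.

Lemma GD_omega {J : Type} (D : J -> Prop) g :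
  countable_set J D -> G_ J D g -> Sym_omega J g.
Proof.
  intros HD [P Hs]. split; auto. exact (countable_sub _ _ HD Hs).
Qed.

Lemma part2 {J : Type} f : union_G J f <-> Sym_omega J f.
Proof.
  split.
  - intros [D [HD HG]]. exact (GD_omega D f HD HG).
  - intros [P Hc]. exists (supp J f). split; auto. split; auto.
Qed.

Lemma group_top {J : Type} : is_group_topology J (Sym_omega J) (@locop J (Sym_omega J)).
Proof.
  split; [|split].
  - split; [|split; [|split; [|split]]].
    + intros U HU. apply HU.
    + split; intros f Hf; contradiction.
    + split; auto. intros f _. exists nil. auto.
    + intros F HF. split.
      * intros f [U [FU Uf]]. exact (proj1 (HF U FU) f Uf).
      * intros f [U [FU Uf]]. destruct (proj2 (HF U FU) f Uf) as [l Hl].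
        exists l. intros h Sh Ah. exists U. split; auto.
    + intros U V [HU1 HU2] [HV1 HV2]. split.
      * intros f [Uf _]; auto.
      * intros f [Uf Vf]. destruct (HU2 f Uf) as [l1 H1]. destruct (HV2 f Vf) as [l2 H2].
        exists (l1 ++ l2). intros h Sh Ah. split.
        -- apply H1; auto. intros x Hx; apply Ah, in_or_app; auto.
        -- apply H2; auto. intros x Hx; apply Ah, in_or_app; auto.
  - intros W [HW1 HW2] f g Sf Sg Wfg.
    destruct (HW2 _ Wfg) as [l Hl].
    exists (fun a => Sym_omega J a /\ agree a f (map g l)),
           (fun b => Sym_omega J b /\ agree b g l).
    split; [|split; [|split; [|split]]].
    + split. intros a [Sa _]; auto.
      intros a [Sa Aa]. exists (map g l). intros h Sh Ah. split; auto.
      intros x Hx. rewrite Ah, Aa; auto.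
    + split. intros a [Sa _]; auto.
      intros a [Sa Aa]. exists l. intros h Sh Ah. split; auto.
      intros x Hx. rewrite Ah, Aa; auto.
    + split; auto. intros x _; auto.
    + split; auto. intros x _; auto.
    + intros a b [Sa Aa] [Sb Ab]. apply Hl.
      * apply comp_omega; auto.
      * intros x Hx. simpl. rewrite Ab; auto. apply Aa. apply in_map; auto.
  - intros W [HW1 HW2]. split.
    + intros f [Sf _]; auto.
    + intros f [Sf [g [Wg [G1 G2]]]].
      destruct (HW2 g Wg) as [l Hl]. exists (map g l).
      intros h Sh Ah. split; auto.
      destruct Sh as [[h' [H1 H2]] Hch] eqn:Eh.
      exists h'. split; [|split; auto].
      apply Hl.
      * apply (inv_omega h h'); auto.
      * intros y Hy. assert (E : h (g y) = y).
        { rewrite Ah. apply G2. apply in_map; auto. }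
        rewrite <- E at 1. apply H1.
Qed.

Fixpoint flat {J : Type} (l : list (option J)) : list J :=
  match l with
  | nil => nil
  | None :: t => flat t
  | Some y :: t => y :: flat t
  end.

Definition nextx {J : Type} (e0 : nat -> option J) (s : list J -> nat -> option J)
  (H : list (option J)) (n : nat) : option J :=
  match Cantor.of_nat n with
  | (0, j) => e0 j
  | (S k, j) => s (flat (firstn k H)) j
  end.

Fixpoint hist {J : Type} e0 s (n : nat) : list (option J) :=
  match n with
  | 0 => nil
  | S n => hist e0 s n ++ [nextx e0 s (hist e0 s n) n]
  end.

Definition xs {J : Type} e0 s (n : nat) : option J := nextx e0 s (hist e0 s n) n.

Lemma hist_len {J : Type} e0 s n : length (@hist J e0 s n) = n.
Proof.
  induction n; simpl; auto. rewrite length_app, IHn. simpl. lia.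
Qed.

Lemma hist_prefix {J : Type} e0 s k d : exists t, @hist J e0 s (k + d) = hist e0 s k ++ t.
Proof.
  induction d.
  - exists nil. rewrite Nat.add_0_r, app_nil_r. auto.
  - destruct IHd as [t Ht]. rewrite Nat.add_succ_r. simpl. rewrite Ht.
    eexists. rewrite <- app_assoc. reflexivity.
Qed.

Lemma hist_firstn {J : Type} e0 s k n : k <= n -> firstn k (@hist J e0 s n) = hist e0 s k.
Proof.
  intros Hk. replace n with (k + (n - k)) by lia.
  destruct (hist_prefix e0 s k (n - k)) as [t Ht]. rewrite Ht.
  rewrite firstn_app, hist_len, Nat.sub_diag. simpl. rewrite app_nil_r.
  apply firstn_all2. rewrite hist_len. lia.
Qed.

Lemma in_flat {J : Type} (y : J) L : In (Some y) L -> In y (flat L).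
Proof.
  induction L as [|[a|] L IH]; simpl; auto.
  intros [E|H]. injection E; auto. right; auto.
  intros [E|H]. discriminate. auto.
Qed.

Lemma xs_in_hist {J : Type} e0 s m N y :
  m < N -> @xs J e0 s m = Some y -> In y (flat (hist e0 s N)).
Proof.
  intros Hm Hx. apply in_flat.
  replace N with (S m + (N - S m)) by lia.
  destruct (hist_prefix e0 s (S m) (N - S m)) as [t Ht]. rewrite Ht.
  apply in_or_app. left. simpl. apply in_or_app. right. rewrite <- Hx. left; auto.
Qed.

Lemma key {J : Type} (U : pset J) :
  colim_open J U -> forall f, U f ->
  exists l, forall h, Sym_omega J h -> agree h f l -> U h.
Proof.
  intros [HU1 HU2] f Uf. apply NNPP. intro Hno.
  assert (Hcx : forall l, exists h, Sym_omega J h /\ agree h f l /\ ~ U h).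
  { intro l. apply NNPP. intro Hn. apply Hno. exists l. intros h Sh Ah.
    apply NNPP. intro Hnu. apply Hn. exists h. auto. }
  destruct (choice_fun _ Hcx) as [Hc HHc].
  assert (Hs : forall l, exists e, enum_of (supp J (Hc l)) e).
  { intro l. apply countable_enum. apply (HHc l). }
  destruct (choice_fun _ Hs) as [s Hs'].
  destruct (HU1 f Uf) as [D0 [HD0 GD0]].
  destruct (countable_enum _ HD0) as [e0 He0].
  set (D := fun y => exists n, xs e0 s n = Some y).
  assert (HD : countable_set J D).
  { apply (enum_countable _ (xs e0 s)). intro y; unfold D; tauto. }
  assert (D0D : forall y, D0 y -> D y).
  { intros y Hy. destruct (proj1 (He0 y) Hy) as [j Ej].
    exists (Cantor.to_nat (0, j)). unfold xs, nextx. rewrite Cantor.cancel_of_to. exact Ej. }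
  assert (GDf : G_ J D f).
  { destruct GD0 as [P Hs0]. split; auto. }
  destruct (HU2 D HD) as [V [HV HVe]].
  apply subspace_local in HV. destruct HV as [HV1 HV2].
  assert (Vf : V f) by (apply HVe; auto).
  destruct (HV2 f Vf) as [l Hl].
  assert (HN : exists N, forall x, In x l -> D x -> exists m, m < N /\ xs e0 s m = Some x).
  { clear Hl. induction l as [|a t IH].
    - exists 0. intros x [].
    - destruct IH as [Nt HNt]. destruct (classic (D a)) as [[ma Ema]|Da].
      + exists (Nat.max Nt (S ma)). intros x [<-|Hx] Dx.
        * exists ma. split; auto. lia.
        * destruct (HNt x Hx Dx) as [m [Hm Em]]. exists m. split; auto. lia.
      + exists Nt. intros x [<-|Hx] Dx. contradiction. auto. }
  destruct HN as [N HN].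
  set (L := flat (hist e0 s N)).
  destruct (HHc L) as [Sh [Ah NUh]].
  assert (GDh : G_ J D (Hc L)).
  { split. apply Sh. intros y Hy. destruct (proj1 (Hs' L y) Hy) as [j Ej].
    exists (Cantor.to_nat (S N, j)). unfold xs, nextx. rewrite Cantor.cancel_of_to.
    rewrite hist_firstn. exact Ej.
    pose proof (Cantor.to_nat_non_decreasing (S N) j). lia. }
  apply NUh. apply HVe. split; auto. apply Hl. apply Sh.
  intros x Hx. destruct (classic (D x)) as [Dx|Dx].
  - apply Ah. destruct (HN x Hx Dx) as [m [Hm Em]]. unfold L. apply (xs_in_hist e0 s m); auto.
  - transitivity x.
    + apply NNPP. intro E. apply Dx. apply GDh. exact E.
    + symmetry. apply NNPP. intro E. apply Dx. apply GDf. exact E.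
Qed.

Lemma main {J : Type} (U : pset J) : colim_open J U <-> locop (Sym_omega J) U.
Proof.
  split.
  - intros HU. split.
    + intros f Uf. apply part2. apply (proj1 HU f Uf).
    + apply key; auto.
  - intros [HU1 HU2]. split.
    + intros f Uf. apply part2. auto.
    + intros D HD.
      exists (fun h => Sym J h /\ exists f l, U f /\ agree h f l /\
                 (forall h, Sym_omega J h -> agree h f l -> U h)).
      split.
      * apply subspace_local. split.
        -- intros h [Sh _]; auto.
        -- intros h [Sh [f [l [Uf [Ag Hh]]]]]. exists l. intros h' Sh' Ah'.
           split; auto. exists f, l. repeat split; auto;
           intros x Hx; rewrite Ah', Ag; auto.
      * intros g. split.
        -- intros [Ug Gg]. split; auto. split. apply Gg.
           destruct (HU2 g Ug) as [l Hl]. exists g, l. repeat split; auto; intros x _; auto.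
        -- intros [[Sg [f [l [Uf [Ag Hh]]]]] Gg]. split; auto.
           apply Hh; auto. apply (GD_omega D); auto.
Qed.

Theorem corollary2p7 (J : Type) :
  ACP J /\
  (forall f, union_G J f <-> Sym_omega J f) /\
  (forall U, colim_open J U <-> subspace_open J (pointwise_open J) (Sym_omega J) U).
Proof.
  split; [|split].
  - split; [|split].
    + assert (E1 : union_G J = Sym_omega J).
      { extensionality f. apply propositional_extensionality. apply part2. }
      assert (E2 : colim_open J = locop (Sym_omega J)).
      { extensionality U. apply propositional_extensionality. apply main. }
      rewrite E1, E2. apply group_top.
    + intros D HD V [HV1 HV2]. exact (HV2 D HD).
    + intros T [[Ht _] _] Hinc U TU. split.
      * intros f Uf. exact (Ht U TU f Uf).
      * intros D HD. exact (Hinc D HD U TU).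
  - intro f. apply part2.
  - intro U. rewrite main. rewrite subspace_local. tauto.
Qed.
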